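(* Let $n\ge k\ge 4$ be integers and let $Q_1$ be the unicyclic graph on $k$ vertices consisting of a $4$-cycle $v_1v_2v_3v_4v_1$ together with $k-4$ further vertices, each adjacent (only) to $v_1$. Regard $Q_1$ as a subgraph of $K_n$ and let $\Gamma=(K_n,Q_1^-)$. Then, with $u=n-k$, $$\varphi(\Gamma,\lambda)=(\lambda+1)^{n-5}\Big(\lambda^5+(5-n)\lambda^4+(10-4n)\lambda^3+(12k-6n+4ku-38)\lambda^2+(24k-4n+8ku-91)\lambda+127n-116k-28ku-47\Big).$$
   Context: A signed graph is a pair $(G,\sigma)$ with $\sigma:E(G)\to\{+,-\}$; its adjacency matrix $A$ has $(i,j)$-entry $\sigma(v_iv_j)$ if $v_iv_j\in E(G)$ and $0$ otherwise. For a subgraph $H$ of $K_n$, $(K_n,H^-)$ denotes the signed complete graph on $n$ vertices whose negative edges are exactly the edges of $H$ and all other edges are positive. $\varphi(\Gamma,\lambda)=\det(\lambda I-A(\Gamma))$ is the characteristic polynomial. *)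

(* Defs.v *)
From HB Require Import structures.
From mathcomp Require Import all_boot all_order all_algebra.
Set Implicit Arguments. Unset Strict Implicit. Unset Printing Implicit Defensive.
Import Order.TTheory GRing.Theory Num.Theory.
Local Open Scope ring_scope.

(* The graph Q_1 on k vertices is
   placed on the vertices v1 = 0, v2 = 1, v3 = 2, v4 = 3 (the 4-cycle
   v1 v2 v3 v4 v1) and the pendant vertices 4, ..., k-1, each adjacent to v1. *)
Definition Q1_edge (k : nat) (i j : nat) : bool :=
  let a := minn i j in let b := maxn i j in
  [|| (a == 0) && (b == 1), (a == 1) && (b == 2), (a == 2) && (b == 3),
      (a == 0) && (b == 3) | [&& a == 0, 4 <= b & b < k] ]%N.

Definition signed_Kn_adj (n : nat) (H : nat -> nat -> bool) : 'M[int]_n :=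
  \matrix_(i < n, j < n)
    (if i == j then 0 else if H i j then -1 else 1).

(* Main.v *)
Require Import Defs.
From HB Require Import structures.
From mathcomp Require Import all_boot all_order all_algebra.
From mathcomp Require Import ring zify.
Import Order.TTheory GRing.Theory Num.Theory.
Local Open Scope ring_scope.

Definition cellN (k i : nat) : nat :=
  if i == 0%N then 0%N else if i == 1%N then 1%N else if i == 2%N then 2%N
  else if i == 3%N then 1%N else if (i < k)%N then 3%N else 4%N.
Definition adjN (a b : nat) : bool :=
  [|| (a==0)&&(b==1), (a==1)&&(b==0), (a==1)&&(b==2), (a==2)&&(b==1),
      (a==0)&&(b==3) | (a==3)&&(b==0)]%N.


Lemma edge_cell k i j : (4 <= k)%N -> Q1_edge k i j = adjN (cellN k i) (cellN k j).
Proof.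
move=> hk.
case: i => [|[|[|[|i]]]]; case: j => [|[|[|[|j]]]];
  rewrite /Q1_edge /cellN /adjN /=; try done;
  repeat (case: ifP => //=); try lia.
Qed.

Lemma cell_lt5 k i : (cellN k i < 5)%N.
Proof. rewrite /cellN; by repeat case: ifP. Qed.

Lemma sum5 (R : nzRingType) (g : nat -> R) x : (x < 5)%N ->
  \sum_(a < 5) (x == a)%:R * g a = g x.
Proof.
move=> hx; rewrite !big_ord_recr big_ord0 /=.
by case: x hx => [|[|[|[|[|]]]]] //= _; rewrite !mul1r !mul0r !add0r ?addr0.
Qed.

Section Main.
Variables (n k : nat).
Definition cc : {poly int} := 'X + 1.
Definition UU : 'M[{poly int}]_(n,5) := \matrix_(i, a) ((cellN k i == a)%:R).
Definition VV : 'M[{poly int}]_(5,n) :=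
  \matrix_(a, j) (if adjN a (cellN k j) then 1 else -1).
End Main.

Lemma charE n k : (4 <= k)%N ->
  char_poly_mx (signed_Kn_adj n (Q1_edge k)) = cc%:M + UU n k *m VV n k.
Proof.
move=> hk; apply/matrixP => i j.
rewrite !mxE.
rewrite (eq_bigr (fun a : 'I_5 => (cellN k i == a)%:R *
   (if adjN a (cellN k j) then 1 else -1))); last by move=> a _; rewrite !mxE.
rewrite (@sum5 _ (fun a => (if adjN a (cellN k j) then 1 else -1 : {poly int}))) ?cell_lt5 //.
rewrite -edge_cell //.
case: eqP => [->|_].
  have -> : Q1_edge k j j = false by rewrite edge_cell // /adjN; case: (cellN k j) => [|[|[|[|]]]].
  by rewrite /cc /= polyC0; ring.
by rewrite /= mulr0n sub0r add0r; case: (Q1_edge k i j) => /=; rewrite ?polyCN ?opprK.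
Qed.

Lemma sum_cell (R : zmodType) (f : nat -> R) n k : (4 <= k)%N -> (k <= n)%N ->
  \sum_(j < n) f (cellN k j) = f 0%N + f 1%N *+ 2 + f 2%N + f 3%N *+ (k-4) + f 4%N *+ (n-k).
Proof.
move=> hk hkn.
rewrite -(big_mkord xpredT (fun j => f (cellN k j))).
rewrite (@big_cat_nat _ _ _ k 0 n) // (@big_cat_nat _ _ _ 4 0 k) //=.
rewrite !big_nat_recl // big_geq //.
rewrite (eq_big_nat _ _ (F2 := fun _ => f 3%N)); last first.
  move=> i /andP[h1 h2]; rewrite /cellN.
  have -> : (i == 0)%N = false by lia.
  have -> : (i == 1)%N = false by lia.
  have -> : (i == 2)%N = false by lia.
  have -> : (i == 3)%N = false by lia.
  by rewrite h2.
rewrite [X in _ + X](eq_big_nat _ _ (F2 := fun _ => f 4%N)); last first.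
  move=> i /andP[h1 h2]; rewrite /cellN.
  have -> : (i == 0)%N = false by lia.
  have -> : (i == 1)%N = false by lia.
  have -> : (i == 2)%N = false by lia.
  have -> : (i == 3)%N = false by lia.
  by rewrite ltnNge h1.
rewrite !sumr_const_nat /cellN /= addr0 mulr2n. 
by rewrite !addrA; congr (_ + _ + _); rewrite addrAC.
Qed.

Definition sz (n k b : nat) : {poly int} :=
  if b == 0%N then 1 else if b == 1%N then 2%:R else if b == 2%N then 1
  else if b == 3%N then (k-4)%:R else (n-k)%:R.

Definition WW n k : 'M[{poly int}]_5 :=
  \matrix_(a, b) (cc *+ (a == b) + (if adjN a b then 1 else -1) * sz n k b).

Lemma VUE n k : (4 <= k)%N -> (k <= n)%N -> cc%:M + VV n k *m UU n k = WW n k.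
Proof.
move=> hk hkn; apply/matrixP => a b; rewrite !mxE.
rewrite (eq_bigr (fun j : 'I_n => (fun e => (if adjN a e then 1 else -1) * (e == b)%:R : {poly int}) (cellN k j))); last by move=> j _; rewrite !mxE.
rewrite (@sum_cell _ (fun e => (if adjN a e then 1 else -1) * (e == b)%:R : {poly int}) n k hk hkn).
move: a b => [[|[|[|[|[|a]]]]] ha] [[|[|[|[|[|b]]]]] hb] //=; rewrite /sz /=; ring.
Qed.

Lemma sylv (R : comNzRingType) (c : R) n r (U : 'M[R]_(n,r)) (V : 'M[R]_(r,n)) :
  c ^+ n * \det (c%:M + V *m U) = c ^+ r * \det (c%:M + U *m V).
Proof.
pose P := block_mx 1%:M (-U) V (c%:M).
have h1 : \det P = \det (c%:M + V *m U).
  have := det_mulmx (block_mx 1%:M 0 (-V) 1%:M) P.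
  rewrite det_lblock !det1 mul1r /P mulmx_block.
  rewrite !mul1mx !mul0mx !addr0 mulmx1 addNr mulNmx mulmxN opprK addrC.
  by rewrite det_ublock det1 !mul1r => <-.
have := det_mulmx (block_mx (c%:M) U 0 1%:M) P.
rewrite det_ublock det1 mulr1 det_scalar /P mulmx_block.
rewrite !mul1mx !mul0mx ?addr0 ?add0r mulmx1 mulmxN mul_scalar_mx mul_mx_scalar addNr.
rewrite det_lblock det_scalar -/P h1 => <-. by rewrite mulrC. 
Qed.


Definition detf {R : comNzRingType} n (f : nat -> nat -> R) :=
  \det (\matrix_(i < n, j < n) f i j).

Lemma expandf (R : comNzRingType) n (f : nat -> nat -> R) :
  detf n.+1 f = \sum_(0 <= j < n.+1) f 0%N j * (-1) ^+ j * detf n (fun i l => f i.+1 (bump j l)).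
Proof.
rewrite /detf (expand_det_row _ ord0) big_mkord; apply: eq_bigr => j _.
rewrite /cofactor add0n mulrA !mxE; congr (_ * _ * \det _).
by apply/matrixP => i l; rewrite !mxE.
Qed.

Lemma detf1 (R : comNzRingType) (f : nat -> nat -> R) : detf 1 f = f 0%N 0%N.
Proof. by rewrite /detf det_mx11 mxE. Qed.

Lemma det5 (R : comNzRingType) (f : nat -> nat -> R) :
  detf 5 f = 
    f 0%N 0%N * f 1%N 1%N * f 2%N 2%N * f 3%N 3%N * f 4%N 4%N
    - f 0%N 0%N * f 1%N 1%N * f 2%N 2%N * f 3%N 4%N * f 4%N 3%N
    - f 0%N 0%N * f 1%N 1%N * f 2%N 3%N * f 3%N 2%N * f 4%N 4%N
    + f 0%N 0%N * f 1%N 1%N * f 2%N 3%N * f 3%N 4%N * f 4%N 2%N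
    + f 0%N 0%N * f 1%N 1%N * f 2%N 4%N * f 3%N 2%N * f 4%N 3%N
    - f 0%N 0%N * f 1%N 1%N * f 2%N 4%N * f 3%N 3%N * f 4%N 2%N
    - f 0%N 0%N * f 1%N 2%N * f 2%N 1%N * f 3%N 3%N * f 4%N 4%N
    + f 0%N 0%N * f 1%N 2%N * f 2%N 1%N * f 3%N 4%N * f 4%N 3%N
    + f 0%N 0%N * f 1%N 2%N * f 2%N 3%N * f 3%N 1%N * f 4%N 4%N
    - f 0%N 0%N * f 1%N 2%N * f 2%N 3%N * f 3%N 4%N * f 4%N 1%N
    - f 0%N 0%N * f 1%N 2%N * f 2%N 4%N * f 3%N 1%N * f 4%N 3%N
    + f 0%N 0%N * f 1%N 2%N * f 2%N 4%N * f 3%N 3%N * f 4%N 1%N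
    + f 0%N 0%N * f 1%N 3%N * f 2%N 1%N * f 3%N 2%N * f 4%N 4%N
    - f 0%N 0%N * f 1%N 3%N * f 2%N 1%N * f 3%N 4%N * f 4%N 2%N
    - f 0%N 0%N * f 1%N 3%N * f 2%N 2%N * f 3%N 1%N * f 4%N 4%N
    + f 0%N 0%N * f 1%N 3%N * f 2%N 2%N * f 3%N 4%N * f 4%N 1%N
    + f 0%N 0%N * f 1%N 3%N * f 2%N 4%N * f 3%N 1%N * f 4%N 2%N
    - f 0%N 0%N * f 1%N 3%N * f 2%N 4%N * f 3%N 2%N * f 4%N 1%N
    - f 0%N 0%N * f 1%N 4%N * f 2%N 1%N * f 3%N 2%N * f 4%N 3%N
    + f 0%N 0%N * f 1%N 4%N * f 2%N 1%N * f 3%N 3%N * f 4%N 2%N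
    + f 0%N 0%N * f 1%N 4%N * f 2%N 2%N * f 3%N 1%N * f 4%N 3%N
    - f 0%N 0%N * f 1%N 4%N * f 2%N 2%N * f 3%N 3%N * f 4%N 1%N
    - f 0%N 0%N * f 1%N 4%N * f 2%N 3%N * f 3%N 1%N * f 4%N 2%N
    + f 0%N 0%N * f 1%N 4%N * f 2%N 3%N * f 3%N 2%N * f 4%N 1%N
    - f 0%N 1%N * f 1%N 0%N * f 2%N 2%N * f 3%N 3%N * f 4%N 4%N
    + f 0%N 1%N * f 1%N 0%N * f 2%N 2%N * f 3%N 4%N * f 4%N 3%N
    + f 0%N 1%N * f 1%N 0%N * f 2%N 3%N * f 3%N 2%N * f 4%N 4%N
    - f 0%N 1%N * f 1%N 0%N * f 2%N 3%N * f 3%N 4%N * f 4%N 2%N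
    - f 0%N 1%N * f 1%N 0%N * f 2%N 4%N * f 3%N 2%N * f 4%N 3%N
    + f 0%N 1%N * f 1%N 0%N * f 2%N 4%N * f 3%N 3%N * f 4%N 2%N
    + f 0%N 1%N * f 1%N 2%N * f 2%N 0%N * f 3%N 3%N * f 4%N 4%N
    - f 0%N 1%N * f 1%N 2%N * f 2%N 0%N * f 3%N 4%N * f 4%N 3%N
    - f 0%N 1%N * f 1%N 2%N * f 2%N 3%N * f 3%N 0%N * f 4%N 4%N
    + f 0%N 1%N * f 1%N 2%N * f 2%N 3%N * f 3%N 4%N * f 4%N 0%N
    + f 0%N 1%N * f 1%N 2%N * f 2%N 4%N * f 3%N 0%N * f 4%N 3%N
    - f 0%N 1%N * f 1%N 2%N * f 2%N 4%N * f 3%N 3%N * f 4%N 0%N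
    - f 0%N 1%N * f 1%N 3%N * f 2%N 0%N * f 3%N 2%N * f 4%N 4%N
    + f 0%N 1%N * f 1%N 3%N * f 2%N 0%N * f 3%N 4%N * f 4%N 2%N
    + f 0%N 1%N * f 1%N 3%N * f 2%N 2%N * f 3%N 0%N * f 4%N 4%N
    - f 0%N 1%N * f 1%N 3%N * f 2%N 2%N * f 3%N 4%N * f 4%N 0%N
    - f 0%N 1%N * f 1%N 3%N * f 2%N 4%N * f 3%N 0%N * f 4%N 2%N
    + f 0%N 1%N * f 1%N 3%N * f 2%N 4%N * f 3%N 2%N * f 4%N 0%N
    + f 0%N 1%N * f 1%N 4%N * f 2%N 0%N * f 3%N 2%N * f 4%N 3%N
    - f 0%N 1%N * f 1%N 4%N * f 2%N 0%N * f 3%N 3%N * f 4%N 2%N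
    - f 0%N 1%N * f 1%N 4%N * f 2%N 2%N * f 3%N 0%N * f 4%N 3%N
    + f 0%N 1%N * f 1%N 4%N * f 2%N 2%N * f 3%N 3%N * f 4%N 0%N
    + f 0%N 1%N * f 1%N 4%N * f 2%N 3%N * f 3%N 0%N * f 4%N 2%N
    - f 0%N 1%N * f 1%N 4%N * f 2%N 3%N * f 3%N 2%N * f 4%N 0%N
    + f 0%N 2%N * f 1%N 0%N * f 2%N 1%N * f 3%N 3%N * f 4%N 4%N
    - f 0%N 2%N * f 1%N 0%N * f 2%N 1%N * f 3%N 4%N * f 4%N 3%N
    - f 0%N 2%N * f 1%N 0%N * f 2%N 3%N * f 3%N 1%N * f 4%N 4%N
    + f 0%N 2%N * f 1%N 0%N * f 2%N 3%N * f 3%N 4%N * f 4%N 1%N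
    + f 0%N 2%N * f 1%N 0%N * f 2%N 4%N * f 3%N 1%N * f 4%N 3%N
    - f 0%N 2%N * f 1%N 0%N * f 2%N 4%N * f 3%N 3%N * f 4%N 1%N
    - f 0%N 2%N * f 1%N 1%N * f 2%N 0%N * f 3%N 3%N * f 4%N 4%N
    + f 0%N 2%N * f 1%N 1%N * f 2%N 0%N * f 3%N 4%N * f 4%N 3%N
    + f 0%N 2%N * f 1%N 1%N * f 2%N 3%N * f 3%N 0%N * f 4%N 4%N
    - f 0%N 2%N * f 1%N 1%N * f 2%N 3%N * f 3%N 4%N * f 4%N 0%N
    - f 0%N 2%N * f 1%N 1%N * f 2%N 4%N * f 3%N 0%N * f 4%N 3%N
    + f 0%N 2%N * f 1%N 1%N * f 2%N 4%N * f 3%N 3%N * f 4%N 0%N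
    + f 0%N 2%N * f 1%N 3%N * f 2%N 0%N * f 3%N 1%N * f 4%N 4%N
    - f 0%N 2%N * f 1%N 3%N * f 2%N 0%N * f 3%N 4%N * f 4%N 1%N
    - f 0%N 2%N * f 1%N 3%N * f 2%N 1%N * f 3%N 0%N * f 4%N 4%N
    + f 0%N 2%N * f 1%N 3%N * f 2%N 1%N * f 3%N 4%N * f 4%N 0%N
    + f 0%N 2%N * f 1%N 3%N * f 2%N 4%N * f 3%N 0%N * f 4%N 1%N
    - f 0%N 2%N * f 1%N 3%N * f 2%N 4%N * f 3%N 1%N * f 4%N 0%N
    - f 0%N 2%N * f 1%N 4%N * f 2%N 0%N * f 3%N 1%N * f 4%N 3%N
    + f 0%N 2%N * f 1%N 4%N * f 2%N 0%N * f 3%N 3%N * f 4%N 1%N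
    + f 0%N 2%N * f 1%N 4%N * f 2%N 1%N * f 3%N 0%N * f 4%N 3%N
    - f 0%N 2%N * f 1%N 4%N * f 2%N 1%N * f 3%N 3%N * f 4%N 0%N
    - f 0%N 2%N * f 1%N 4%N * f 2%N 3%N * f 3%N 0%N * f 4%N 1%N
    + f 0%N 2%N * f 1%N 4%N * f 2%N 3%N * f 3%N 1%N * f 4%N 0%N
    - f 0%N 3%N * f 1%N 0%N * f 2%N 1%N * f 3%N 2%N * f 4%N 4%N
    + f 0%N 3%N * f 1%N 0%N * f 2%N 1%N * f 3%N 4%N * f 4%N 2%N
    + f 0%N 3%N * f 1%N 0%N * f 2%N 2%N * f 3%N 1%N * f 4%N 4%N
    - f 0%N 3%N * f 1%N 0%N * f 2%N 2%N * f 3%N 4%N * f 4%N 1%N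
    - f 0%N 3%N * f 1%N 0%N * f 2%N 4%N * f 3%N 1%N * f 4%N 2%N
    + f 0%N 3%N * f 1%N 0%N * f 2%N 4%N * f 3%N 2%N * f 4%N 1%N
    + f 0%N 3%N * f 1%N 1%N * f 2%N 0%N * f 3%N 2%N * f 4%N 4%N
    - f 0%N 3%N * f 1%N 1%N * f 2%N 0%N * f 3%N 4%N * f 4%N 2%N
    - f 0%N 3%N * f 1%N 1%N * f 2%N 2%N * f 3%N 0%N * f 4%N 4%N
    + f 0%N 3%N * f 1%N 1%N * f 2%N 2%N * f 3%N 4%N * f 4%N 0%N
    + f 0%N 3%N * f 1%N 1%N * f 2%N 4%N * f 3%N 0%N * f 4%N 2%N
    - f 0%N 3%N * f 1%N 1%N * f 2%N 4%N * f 3%N 2%N * f 4%N 0%N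
    - f 0%N 3%N * f 1%N 2%N * f 2%N 0%N * f 3%N 1%N * f 4%N 4%N
    + f 0%N 3%N * f 1%N 2%N * f 2%N 0%N * f 3%N 4%N * f 4%N 1%N
    + f 0%N 3%N * f 1%N 2%N * f 2%N 1%N * f 3%N 0%N * f 4%N 4%N
    - f 0%N 3%N * f 1%N 2%N * f 2%N 1%N * f 3%N 4%N * f 4%N 0%N
    - f 0%N 3%N * f 1%N 2%N * f 2%N 4%N * f 3%N 0%N * f 4%N 1%N
    + f 0%N 3%N * f 1%N 2%N * f 2%N 4%N * f 3%N 1%N * f 4%N 0%N
    + f 0%N 3%N * f 1%N 4%N * f 2%N 0%N * f 3%N 1%N * f 4%N 2%N
    - f 0%N 3%N * f 1%N 4%N * f 2%N 0%N * f 3%N 2%N * f 4%N 1%N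
    - f 0%N 3%N * f 1%N 4%N * f 2%N 1%N * f 3%N 0%N * f 4%N 2%N
    + f 0%N 3%N * f 1%N 4%N * f 2%N 1%N * f 3%N 2%N * f 4%N 0%N
    + f 0%N 3%N * f 1%N 4%N * f 2%N 2%N * f 3%N 0%N * f 4%N 1%N
    - f 0%N 3%N * f 1%N 4%N * f 2%N 2%N * f 3%N 1%N * f 4%N 0%N
    + f 0%N 4%N * f 1%N 0%N * f 2%N 1%N * f 3%N 2%N * f 4%N 3%N
    - f 0%N 4%N * f 1%N 0%N * f 2%N 1%N * f 3%N 3%N * f 4%N 2%N
    - f 0%N 4%N * f 1%N 0%N * f 2%N 2%N * f 3%N 1%N * f 4%N 3%N
    + f 0%N 4%N * f 1%N 0%N * f 2%N 2%N * f 3%N 3%N * f 4%N 1%N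
    + f 0%N 4%N * f 1%N 0%N * f 2%N 3%N * f 3%N 1%N * f 4%N 2%N
    - f 0%N 4%N * f 1%N 0%N * f 2%N 3%N * f 3%N 2%N * f 4%N 1%N
    - f 0%N 4%N * f 1%N 1%N * f 2%N 0%N * f 3%N 2%N * f 4%N 3%N
    + f 0%N 4%N * f 1%N 1%N * f 2%N 0%N * f 3%N 3%N * f 4%N 2%N
    + f 0%N 4%N * f 1%N 1%N * f 2%N 2%N * f 3%N 0%N * f 4%N 3%N
    - f 0%N 4%N * f 1%N 1%N * f 2%N 2%N * f 3%N 3%N * f 4%N 0%N
    - f 0%N 4%N * f 1%N 1%N * f 2%N 3%N * f 3%N 0%N * f 4%N 2%N
    + f 0%N 4%N * f 1%N 1%N * f 2%N 3%N * f 3%N 2%N * f 4%N 0%N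
    + f 0%N 4%N * f 1%N 2%N * f 2%N 0%N * f 3%N 1%N * f 4%N 3%N
    - f 0%N 4%N * f 1%N 2%N * f 2%N 0%N * f 3%N 3%N * f 4%N 1%N
    - f 0%N 4%N * f 1%N 2%N * f 2%N 1%N * f 3%N 0%N * f 4%N 3%N
    + f 0%N 4%N * f 1%N 2%N * f 2%N 1%N * f 3%N 3%N * f 4%N 0%N
    + f 0%N 4%N * f 1%N 2%N * f 2%N 3%N * f 3%N 0%N * f 4%N 1%N
    - f 0%N 4%N * f 1%N 2%N * f 2%N 3%N * f 3%N 1%N * f 4%N 0%N
    - f 0%N 4%N * f 1%N 3%N * f 2%N 0%N * f 3%N 1%N * f 4%N 2%N
    + f 0%N 4%N * f 1%N 3%N * f 2%N 0%N * f 3%N 2%N * f 4%N 1%N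
    + f 0%N 4%N * f 1%N 3%N * f 2%N 1%N * f 3%N 0%N * f 4%N 2%N
    - f 0%N 4%N * f 1%N 3%N * f 2%N 1%N * f 3%N 2%N * f 4%N 0%N
    - f 0%N 4%N * f 1%N 3%N * f 2%N 2%N * f 3%N 0%N * f 4%N 1%N
    + f 0%N 4%N * f 1%N 3%N * f 2%N 2%N * f 3%N 1%N * f 4%N 0%N.
Proof.
do 4! rewrite !expandf /index_iota /= !big_cons !big_nil.
rewrite !detf1 /=.
ring.
Qed.


Lemma detW n k : (4 <= k)%N -> (k <= n)%N ->
  \det (WW n k) =
    ('X ^+ 5 + (5 - n%:Z)%:P * 'X ^+ 4 + (10 - 4 * n%:Z)%:P * 'X ^+ 3
     + (12 * k%:Z - 6 * n%:Z + 4 * k%:Z * (n - k)%:Z - 38)%:P * 'X ^+ 2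
     + (24 * k%:Z - 4 * n%:Z + 8 * k%:Z * (n - k)%:Z - 91)%:P * 'X
     + (127 * n%:Z - 116 * k%:Z - 28 * k%:Z * (n - k)%:Z - 47)%:P).
Proof.
move=> hk hkn.
have -> : \det (WW n k) = detf 5 (fun a b => cc *+ (a == b) + (if adjN a b then 1 else -1) * sz n k b).
  done.
rewrite det5 /=.
rewrite /sz /cc /=.
have [m hm] : exists m, k = (m + 4)%N by exists (k - 4)%N; lia.
subst k.
have [u hu] : exists u, n = (m + 4 + u)%N by exists (n - (m+4))%N; lia.
subst n.
rewrite addnK addKn.
rewrite -!natz.
ring.
Qed.


Theorem lemma3p1 (n k : nat) (hk : (4 <= k)%N) (hkn : (k <= n)%N) :
  let u : int := (n - k)%:Z in
  let N : int := n%:Z in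
  let K : int := k%:Z in
  char_poly (signed_Kn_adj n (Q1_edge k)) * ('X + 1) =
  ('X + 1) ^+ (n - 4) *
    ('X ^+ 5 + (5 - N)%:P * 'X ^+ 4 + (10 - 4 * N)%:P * 'X ^+ 3
     + (12 * K - 6 * N + 4 * K * u - 38)%:P * 'X ^+ 2
     + (24 * K - 4 * N + 8 * K * u - 91)%:P * 'X
     + (127 * N - 116 * K - 28 * K * u - 47)%:P).
Proof.
move=> u N K; rewrite /u /N /K.
have hs := @sylv _ cc n 5 (UU n k) (VV n k).
rewrite VUE // detW // in hs.
rewrite /char_poly charE // -detW //.
rewrite -detW // in hs.
have hc : cc != 0 by rewrite /cc -polyC1 -size_poly_eq0 size_XaddC.
apply: (@mulfI _ (cc ^+ 4)); first by rewrite expf_neq0.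
have -> : ('X + 1 : {poly int}) = cc by [].
rewrite [RHS]mulrA -exprD addnC subnK; last by lia.
rewrite hs; ring.
Qed.
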